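(* Let $\eta\in(0,\frac12]$. For each cluster $V_i$, $i\in[k]$, let $B_i\subseteq V$ be an $(\eta,V_i)$-biased set of size at least $\frac{16\log n}{\eta^2\delta^2}$ (fixed independently of the oracle's answers on pairs involving it). Then with probability at least $1-n^{-6}$, the following holds for all $v\in V$ and all $i\in[k]$ simultaneously: (1) if $v\in V_i$, then $\mathsf{ClusterVerify}(v,B_i)$ returns TRUE; (2) if $v\notin V_i$, then $\mathsf{ClusterVerify}(v,B_i)$ returns FALSE.
   Context: Clustering with a faulty oracle: a set $V$ of $n$ vertices is partitioned into $k$ unknown clusters $V_1,\dots,V_k$; $\tau(u,v)=1$ if $u,v$ are in the same cluster, $-1$ otherwise. A query of pair $(u,v)$ returns $\tilde\tau(u,v)=\sigma_{u,v}\tau(u,v)$ with independent $\sigma_{u,v}\in\{\pm1\}$, $\Pr[\sigma_{u,v}=+1]=\frac12+\frac\delta2$, $\delta\in(0,1)$; repeated queries return the same answer. For $\eta\in[0,\frac12]$ and a cluster $C=V_i$, a set $B\subseteq V$ is $(\eta,C)$-biased if $|B\cap C|\ge(\frac12+\eta)|B|$. $\mathsf{ClusterVerify}(v,B)$: query $(v,u)$ for every $u\in B$, let $d(v,B)=\#\{u\in B:\tilde\tau(v,u)=1\}$, and output TRUE if $d(v,B)\ge\frac12|B|$, FALSE otherwise. *)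

(* Defs.v *)
From HB Require Import structures.
From mathcomp Require Import all_boot all_order all_algebra.
From mathcomp Require Import reals exp.
Set Implicit Arguments. Unset Strict Implicit. Unset Printing Implicit Defensive.
Import Order.TTheory GRing.Theory Num.Theory.
Local Open Scope ring_scope.

(* A noise outcome is s : {ffun 'I_n * 'I_n -> bool};
   s x = true means sigma = +1.  The unordered pair {u,v} uses the coordinate
   pkey u v = (min,max); the remaining coordinates are irrelevant dummies, and
   since all coordinates are i.i.d. the induced law on the relevant ones is the
   product law of the independent sigma_{u,v}. *)

Definition tau n k (c : 'I_n -> 'I_k) (u v : 'I_n) : bool := c u == c v.

Definition pkey n (u v : 'I_n) : 'I_n * 'I_n :=
  if (u <= v)%N then (u, v) else (v, u).

(* oracle answer: true iff tilde-tau(v,u) = +1, i.e. sigma_{v,u} * tau(v,u) = 1 *)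
Definition answer n k (c : 'I_n -> 'I_k) (s : {ffun 'I_n * 'I_n -> bool})
  (v u : 'I_n) : bool := s (pkey v u) == tau c v u.

Definition dvB n k (c : 'I_n -> 'I_k) s (v : 'I_n) (B : {set 'I_n}) : nat :=
  #|[set u in B | answer c s v u]|.

Definition ClusterVerify n k (c : 'I_n -> 'I_k) s (v : 'I_n) (B : {set 'I_n}) : bool :=
  (#|B| <= 2 * dvB c s v B)%N.

Definition cluster n k (c : 'I_n -> 'I_k) (i : 'I_k) : {set 'I_n} := [set v | c v == i].

Definition biased (R : realFieldType) n k (c : 'I_n -> 'I_k) (eta : R) (i : 'I_k)
  (B : {set 'I_n}) : Prop :=
  (1/2 + eta) * #|B|%:R <= #|B :&: cluster c i|%:R.

Definition wt (R : realFieldType) (delta : R) (b : bool) : R :=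
  if b then 1/2 + delta/2 else 1/2 - delta/2.

Definition Pr (R : realFieldType) n (delta : R)
  (E : pred {ffun 'I_n * 'I_n -> bool}) : R :=
  \sum_(s | E s) \prod_(x : 'I_n * 'I_n) wt delta (s x).

(* Main.v *)
Require Import Defs.
From HB Require Import structures.
From mathcomp Require Import all_boot all_order all_algebra.
From mathcomp Require Import reals exp sequences.
From mathcomp Require Import ring lra zify.
Import Order.TTheory GRing.Theory Num.Theory.
Local Open Scope ring_scope.
Set Implicit Arguments. Unset Strict Implicit.

Lemma wt_sum (R : realFieldType) (delta : R) : \sum_(b : bool) wt delta b = 1.
Proof. rewrite big_bool /wt /=. by field. Qed.

Lemma expect_prod (R : realFieldType) (n : nat) (delta : R) (I : finType)
  (g : I -> 'I_n * 'I_n) (ginj : injective g) (P : pred I) (F : I -> bool -> R) :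
  \sum_(s : {ffun 'I_n * 'I_n -> bool})
     (\prod_x wt delta (s x)) * \prod_(u | P u) F u (s (g u))
  = \prod_(u | P u) \sum_(b : bool) wt delta b * F u b.
Proof.
pose K x b := \prod_(u | P u && (g u == x)) F u b.
transitivity (\sum_(s : {ffun 'I_n * 'I_n -> bool}) \prod_x (wt delta (s x) * K x (s x))).
  apply: eq_bigr => s _.
  rewrite big_split /=; congr (_ * _).
  rewrite (partition_big g xpredT) //.
  apply: eq_bigr => x _; apply: eq_bigr => u /andP[_ /eqP ->] //.
rewrite -(bigA_distr_bigA (fun x b => wt delta b * K x b)) /=.
rewrite [RHS](partition_big g xpredT) //.
apply: eq_bigr => x _; rewrite /K.
case: (pickP [pred u | P u && (g u == x)]) => [u0 /andP[Pu0 /eqP gu0]|none].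
  have e : [pred u | P u && (g u == x)] =1 pred1 u0.
    move=> u /=; apply/andP/eqP => [[_ /eqP]|->]; last by rewrite Pu0 gu0.
    by rewrite -gu0 => /ginj.
  rewrite (big_pred1 u0 e); apply: eq_bigr => b _; by rewrite (big_pred1 u0 e).
rewrite [RHS]big_pred0 //; under eq_bigr do rewrite big_pred0 // mulr1.
exact: wt_sum.
Qed.

Lemma pkey_inj n (v : 'I_n) : injective (pkey v).
Proof.
move=> u u'; rewrite /pkey.
case: ifP => h1; case: ifP => h2 [] => //.
- by move=> e1 e2; subst.
- by move=> e1 e2; subst.
Qed.

Lemma card_set_in (n : nat) (B : {set 'I_n}) (p : pred 'I_n) :
  #|[set u in B | p u]| = (\sum_(u in B) (p u : nat))%N.
Proof.
rewrite -sum1_card big_mkcond [RHS]big_mkcond; apply: eq_bigr => u _.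
by rewrite !inE; case: (u \in B); case: (p u).
Qed.

Lemma wt_ge0 (R : realFieldType) (delta : R) b : 0 < delta -> delta < 1 -> 0 <= wt delta b.
Proof. by move=> h0 h1; case: b; rewrite /wt; lra. Qed.

Lemma W_ge0 (R : realFieldType) n (delta : R) (s : {ffun 'I_n * 'I_n -> bool}) :
  0 < delta -> delta < 1 -> 0 <= \prod_x wt delta (s x).
Proof. by move=> h0 h1; apply: prodr_ge0 => x _; apply: wt_ge0. Qed.

Lemma fail_bound (R : realType) n (delta eta : R) (hd0 : 0 < delta) (hd1 : delta < 1)
  (he0 : 0 < eta) (he1 : eta <= 1/2)
  (v : 'I_n) (B C : {set 'I_n}) (f : 'I_n -> bool -> bool)
  (hp : forall u, u \in B -> \sum_(b : bool) wt delta b * (f u b)%:R <=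
          (if u \in C then (1 - delta)/2 else (1 + delta)/2))
  (hbias : (1/2 + eta) * #|B|%:R <= #|B :&: C|%:R) :
  Pr delta (fun s => #|B| <= 2 * #|[set u in B | f u (s (pkey v u))]|)%N
   <= expR (-(2/3) * #|B|%:R * (delta * eta) ^+ 2).
Proof.
set m := #|B|.
set y := 2 * (delta * eta) / 3.
have y0 : 0 <= y by rewrite /y; apply: divr_ge0 => //; apply: mulr_ge0 => //; apply: mulr_ge0; lra.
set phi := 1 + y.
have phi1 : 1 <= phi by rewrite /phi; lra.
have phi0 : 0 < phi by rewrite /phi; lra.
pose G u b : R := if f u b then phi ^+ 2 else 1.
have G0 : forall u b, 0 <= G u b.
  by move=> u' b; rewrite /G; case: ifP => _; [apply: exprn_ge0; exact: ltW | exact: ler01].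
set E := (fun s : {ffun 'I_n * 'I_n -> bool} => m <= 2 * #|[set u in B | f u (s (pkey v u))]|)%N.
pose T (s : {ffun 'I_n * 'I_n -> bool}) := (\prod_x wt delta (s x)) * \prod_(u in B) G u (s (pkey v u)) * (phi ^+ m)^-1.
have T0 : forall s, 0 <= T s.
  move=> s; apply: mulr_ge0; last by rewrite invr_ge0 exprn_ge0 // ltW.
  apply: mulr_ge0; first by apply: prodr_ge0 => x _; apply: wt_ge0.
  by apply: prodr_ge0 => u _; rewrite /G; case: ifP => _ //; rewrite exprn_ge0 // ltW.
have step1 : Pr delta E <= \sum_s T s.
  apply: (le_trans (y := \sum_(s | E s) T s)).
    apply: ler_sum => s hs.
    rewrite /T -mulrA ler_peMr //; first by apply: prodr_ge0 => x _; apply: wt_ge0.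
    have -> : \prod_(u in B) G u (s (pkey v u)) = phi ^+ (2 * #|[set u in B | f u (s (pkey v u))]|)%N.
      rewrite exprM card_set_in -prodrXr; apply: eq_bigr => u _.
      by rewrite /G; case: (f u _).
    rewrite ler_pdivlMr ?mul1r ?exprn_gt0 //.
    exact: ler_weXn2l.
  rewrite [X in _ <= X](bigID E) /= lerDl.
  by apply: sumr_ge0 => s _.
have fac : forall u, \sum_(b : bool) wt delta b * G u b
    = 1 + (phi ^+ 2 - 1) * \sum_(b : bool) wt delta b * (f u b)%:R.
  move=> u; rewrite !big_bool /G /wt; case: (f u true); case: (f u false) => /=; rewrite ?mulr1n ?mulr0n; by field.
pose q u : R := (1 + delta) / 2 - delta * (u \in C)%:R.
have hq : forall u, u \in B -> \sum_(b : bool) wt delta b * G u b <= expR ((phi ^+ 2 - 1) * q u).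
  move=> u uB; rewrite fac; apply: (@le_trans _ _ (1 + (phi ^+ 2 - 1) * q u)); last exact: expR_ge1Dx.
  rewrite lerD2l ler_wpM2l //; first by rewrite subr_ge0 expr_ge1 // ltW.
  by apply: le_trans (hp u uB) _; rewrite /q; case: (u \in C) => /=; lra.
have hsq : \sum_(u in B) q u = m%:R * ((1 + delta) / 2) - delta * #|B :&: C|%:R.
  rewrite /q sumrB sumr_const -mulr_sumr -natr_sum -card_set_in mulr_natl.
  congr (_ - delta * _%:R); apply: eq_card => u; by rewrite !inE.
have step2 : \sum_s T s = (\prod_(u in B) \sum_(b : bool) wt delta b * G u b) * (phi ^+ m)^-1.
  by rewrite /T -mulr_suml expect_prod //; exact: pkey_inj.
have step3 : \prod_(u in B) \sum_(b : bool) wt delta b * G u b <= expR ((phi ^+ 2 - 1) * \sum_(u in B) q u).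
  rewrite mulr_sumr expR_sum; apply: ler_prod => u uB; rewrite hq // andbT.
  by rewrite big_bool; apply: addr_ge0; apply: mulr_ge0 => //; apply: wt_ge0.
have step4 : (phi ^+ m)^-1 <= expR (m%:R * (- y + y ^+ 2)).
  rewrite expRM_natl -exprVn; apply: lerXn2r.
  - by rewrite nnegrE invr_ge0 ltW.
  - by rewrite nnegrE expR_ge0.
  apply: (@le_trans _ _ (1 + (- y + y ^+ 2))); last exact: expR_ge1Dx.
  rewrite -div1r ler_pdivrMr // /phi.
  have : 0 <= y ^+ 3 by rewrite exprn_ge0.
  have -> : (1 + (- y + y ^+ 2)) * (1 + y) = 1 + y ^+ 3 by ring.
  lra.
apply: le_trans step1 _; rewrite step2.
apply: le_trans (ler_pM _ _ step3 step4) _.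
- by apply: prodr_ge0 => u _; rewrite big_bool; apply: addr_ge0; apply: mulr_ge0 => //; apply: wt_ge0.
- by rewrite invr_ge0 exprn_ge0 // ltW.
rewrite -expRD ler_expR hsq.
set a := #|B :&: C|%:R.
have m0 : 0 <= m%:R :> R by [].
have ha : delta * ((1/2 + eta) * m%:R) <= delta * a by rewrite ler_pM2l.
have p0 : 0 <= phi ^+ 2 - 1 by rewrite subr_ge0 expr_ge1 // ltW.
apply: (@le_trans _ _ ((phi ^+ 2 - 1) * (m%:R * ((1 + delta) / 2) - delta * ((1/2 + eta) * m%:R)) + m%:R * (- y + y ^+ 2))).
  by rewrite lerD2r ler_wpM2l // lerD2l lerN2.
set e := delta * eta.
have e0 : 0 <= e by rewrite /e; apply: mulr_ge0; apply: ltW.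
have hh := mulr_ge0 (mulr_ge0 m0 (sqr_ge0 y)) e0.
have -> : (phi ^+ 2 - 1) * (m%:R * ((1 + delta) / 2) - delta * ((1/2 + eta) * m%:R)) + m%:R * (- y + y ^+ 2)
   = - (2/3) * m%:R * e ^+ 2 - m%:R * y ^+ 2 * e.
  rewrite /phi /y /e; by field.
lra.
Qed.

Lemma Pr_mono (R : realFieldType) n (delta : R) (hd0 : 0 < delta) (hd1 : delta < 1)
  (E1 E2 : pred {ffun 'I_n * 'I_n -> bool}) :
  (forall s, E1 s -> E2 s) -> Pr delta E1 <= Pr delta E2.
Proof.
move=> h; rewrite /Pr [X in X <= _]big_mkcond [X in _ <= X]big_mkcond.
apply: ler_sum => s _; case: ifP => h1; first by rewrite (h _ h1).
by case: ifP => _ //; apply: prodr_ge0 => x _; apply: wt_ge0.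
Qed.

Lemma Pr_total (R : realFieldType) n (delta : R) :
  \sum_(s : {ffun 'I_n * 'I_n -> bool}) \prod_x wt delta (s x) = 1.
Proof.
have inj : injective (@id ('I_n * 'I_n)) by [].
have h := expect_prod delta inj xpred0 (fun _ _ => (1:R)).
rewrite [RHS]big_pred0 // in h.
apply: etrans _ h; apply: eq_bigr => s _; rewrite [X in _ = _ * X]big_pred0 // mulr1; reflexivity.
Qed.

Lemma Pr_compl (R : realFieldType) n (delta : R) (E : pred {ffun 'I_n * 'I_n -> bool}) :
  Pr delta E = 1 - Pr delta (predC E).
Proof.
rewrite -(Pr_total n delta) (bigID E) /= /Pr; ring.
Qed.

Lemma Pr_union (R : realFieldType) n (delta : R) (hd0 : 0 < delta) (hd1 : delta < 1)
  (I : finType) (E : pred {ffun 'I_n * 'I_n -> bool}) (F : I -> pred {ffun 'I_n * 'I_n -> bool}) :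
  (forall s, E s -> exists i, F i s) -> Pr delta E <= \sum_i Pr delta (F i).
Proof.
move=> h; rewrite /Pr.
under [X in _ <= X]eq_bigr do rewrite big_mkcond.
rewrite exchange_big /= [X in X <= _]big_mkcond.
apply: ler_sum => s _.
have W0 : 0 <= \prod_x wt delta (s x) by apply: prodr_ge0 => x _; apply: wt_ge0.
case: ifP => hs; last by apply: sumr_ge0 => i _; case: ifP.
have [i0 hi0] := h s hs.
rewrite (bigD1 i0) //= hi0 lerDl; apply: sumr_ge0 => i _; by case: ifP.
Qed.

Lemma card_split (n : nat) (B : {set 'I_n}) (p : pred 'I_n) :
  (#|[set u in B | p u]| + #|[set u in B | ~~ p u]|)%N = #|B|.
Proof.
rewrite !card_set_in -big_split /= -sum1_card; apply: eq_bigr => u _.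
by case: (p u).
Qed.

Lemma k_le_n n k (c : 'I_n -> 'I_k) : (forall i : 'I_k, exists v : 'I_n, c v = i) -> (k <= n)%N.
Proof.
move=> hs.
have : [set: 'I_k] \subset c @: [set: 'I_n].
  apply/subsetP => i _; have [v <-] := hs i; by rewrite imset_f.
move/subset_leq_card; rewrite cardsT card_ord => h.
by apply: leq_trans h _; rewrite (leq_trans (leq_imset_card _ _)) // cardsT card_ord.
Qed.

Theorem lemma3p4 (R : realType) (n k : nat) (c : 'I_n -> 'I_k)
  (c_surj : forall i : 'I_k, exists v : 'I_n, c v = i)
  (delta eta : R) (hd0 : 0 < delta) (hd1 : delta < 1)
  (he0 : 0 < eta) (he1 : eta <= 1/2)
  (B : 'I_k -> {set 'I_n})
  (hB : forall i, biased c eta i (B i))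
  (hsize : forall i, 16 * ln (n%:R) / (eta ^+ 2 * delta ^+ 2) <= #|B i|%:R) :
  1 - (n%:R ^+ 6)^-1 <=
  Pr delta (fun s => [forall v : 'I_n, forall i : 'I_k,
      ((c v == i) ==> ClusterVerify c s v (B i)) &&
      ((c v != i) ==> ~~ ClusterVerify c s v (B i))]).
Proof.
set good := (fun s => _).
rewrite Pr_compl lerD2l lerN2.
pose F (p : 'I_n * 'I_k) := (fun s : {ffun 'I_n * 'I_n -> bool} =>
   ~~ (((c p.1 == p.2) ==> ClusterVerify c s p.1 (B p.2)) &&
      ((c p.1 != p.2) ==> ~~ ClusterVerify c s p.1 (B p.2)))).
apply: (le_trans (Pr_union hd0 hd1 (F := F) _)).
  move=> s /= /forallPn [v /forallPn [i hi]]; by exists (v, i).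
have hF : forall p, Pr delta (F p) <= (n%:R ^+ 8)^-1.
  move=> [v i]; rewrite /F /=.
  set m := #|B i|.
  have N1 : 1 <= n%:R :> R by rewrite ler1n; case: (n) v => [[]|].
  have hexp : expR (-(2/3) * m%:R * (delta * eta) ^+ 2) <= (n%:R ^+ 8)^-1.
    have lnN : 0 <= ln (n%:R : R) by apply: ln_ge0.
    have h16 : 16 * ln (n%:R : R) <= m%:R * (delta * eta) ^+ 2.
      have := hsize i; rewrite ler_pdivrMr; last first.
        by apply: mulr_gt0; apply: exprn_gt0.
      by rewrite exprMn [delta ^+ 2 * _]mulrC.
    have -> : (n%:R ^+ 8)^-1 = expR (- (8%:R * ln (n%:R : R))).
      by rewrite expRN expRM_natl lnK // posrE; apply: (lt_le_trans ltr01).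
    rewrite ler_expR; lra.
  case: (eqVneq (c v) i) => hv.
  - apply: (le_trans (Pr_mono hd0 hd1 (E2 := fun s => (m <= 2 * #|[set u in B i | ~~ (s (pkey v u) == tau c v u)]|)%N) _)).
      move=> s; rewrite ?hv ?eqxx /= ?andbT /ClusterVerify /dvB /answer -ltnNge => hcv.
      have := card_split (B i) (fun u => s (pkey v u) == tau c v u); move: hcv; rewrite /m. set X := #|[set u in B i | s (pkey v u) == tau c v u]|. set Y := #|[set u in B i | s (pkey v u) != tau c v u]|. move=> h1 h2; rewrite -h2 in h1 *; move: h1; rewrite !mul2n -!addnn ltn_add2l leq_add2r; exact: ltnW.
    apply: (le_trans _ hexp).
    apply: (@fail_bound R n delta eta hd0 hd1 he0 he1 v (B i) (cluster c i) (fun u b => ~~ (b == tau c v u))); last exact: hB.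
    move=> u _; rewrite big_bool /wt /tau inE hv.
    case: (eqVneq (c u) i) => hu.
      by rewrite /= ?mulr1n ?mulr0n; lra.
    by rewrite /= ?mulr1n ?mulr0n; lra.
  - apply: (le_trans (Pr_mono hd0 hd1 (E2 := fun s => (m <= 2 * #|[set u in B i | (s (pkey v u) == tau c v u)]|)%N) _)).
      by move=> s; rewrite ?(negbTE hv) /= ?negbK /ClusterVerify /dvB /answer.
    apply: (le_trans _ hexp).
    apply: (@fail_bound R n delta eta hd0 hd1 he0 he1 v (B i) (cluster c i) (fun u b => (b == tau c v u))); last exact: hB.
    move=> u _; rewrite big_bool /wt inE; case: (eqVneq (c u) i) => hu /=.
      have -> : tau c v u = false by rewrite /tau hu (negbTE hv).
      by rewrite /= ?mulr1n ?mulr0n; lra.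
    by case: (tau c v u); rewrite /= ?mulr1n ?mulr0n; lra.
apply: (le_trans (ler_sum _ (fun p _ => hF p))).
rewrite sumr_const card_prod !card_ord.
have := k_le_n c_surj.
case: n {c c_surj B hB hsize good F hF} => [|n'] hk.
  by rewrite mul0n mulr0n expr0n /= invr0.
set N := n'.+1%:R.
have N0 : 0 < N by rewrite /N ltr0n.
rewrite -mulr_natr.
have hnk : (n'.+1 * k)%:R <= N ^+ 2 :> R by rewrite /N -natrX ler_nat expnS expn1 leq_mul2l hk orbT.
apply: (@le_trans _ _ ((N ^+ 8)^-1 * N ^+ 2)).
  by rewrite ler_wpM2l // invr_ge0 exprn_ge0 // ltW.
have -> : (N ^+ 8)^-1 * N ^+ 2 = (N ^+ 6)^-1.
  by field; rewrite addrC natr1 pnatr_eq0.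
by [].
Qed.
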